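(* Let $\ell\ge1$ be an integer and $x$ a real number with $x\ge16\ell^{3/2}$. Then $$\sum_{\substack{\sigma\in S_\ell\\ \sigma\text{ has no fixed points}}}x^{|\mathsf{cyc}(\sigma)|}\le e^{\ell^{3/4}}\,\ell!!\,x^{\ell/2}.$$ Consequently also $\sum_{\pi}x^{|\pi|}\le e^{\ell^{3/4}}\,\ell!!\,x^{\ell/2}$, the sum over partitions $\pi$ of $\{1,\dots,\ell\}$ all of whose blocks have size at least $2$.
   Context: $S_\ell$ is the symmetric group on $\{1,\dots,\ell\}$ and $\mathsf{cyc}(\sigma)$ is its set of cycles; $|\pi|$ is the number of blocks of a partition. $n!!=n(n-2)(n-4)\cdots$ (ending at 1 or 2), with $0!!=1$. *)

(* Defs.v *)
From HB Require Import structures.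
From mathcomp Require Import all_boot all_order all_algebra all_fingroup.
From mathcomp Require Import all_classical all_reals all_analysis.
Set Implicit Arguments. Unset Strict Implicit. Unset Printing Implicit Defensive.
Import Order.TTheory GRing.Theory Num.Theory.

Fixpoint dfact (n : nat) : nat :=
  match n with
  | 0 => 1
  | 1 => 1
  | (m.+2) as k => k * dfact m
  end.

Definition partition_ge2 (l : nat) (P : {set {set 'I_l}}) : bool :=
  finset.partition P [set: 'I_l] && [forall B in P, 1 < #|B|]%N.

(* Main.v *)
Require Import Defs.
From HB Require Import structures.
From mathcomp Require Import all_boot all_order all_algebra all_fingroup.
From mathcomp Require Import all_classical all_reals all_analysis.
Import Order.TTheory GRing.Theory Num.Theory.
From mathcomp Require Import zify ring lra.
From mathcomp Require Import fintype finset.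
Local Open Scope ring_scope.
Local Close Scope ring_scope.
Lemma dfactSS n : dfact n.+2 = n.+2 * dfact n. Proof. by []. Qed.

Lemma dfact_gt0 n : 0 < dfact n.
Proof. elim: n {-2}n (leqnn n) => [|k IH] [|[|m]] //= Hm; rewrite muln_gt0 /= IH //; lia. Qed.

Lemma dfact_sq n : dfact n ^ 2 * n.+2 <= 2 * dfact n.+1 ^ 2.
Proof.
elim: n {-2}n (leqnn n) => [|k IH] [|[|m]] Hm //.
rewrite !dfactSS; have := IH m ltac:(lia).
set a := dfact m; set b := dfact m.+1. nia.
Qed.


Local Open Scope ring_scope.
Definition hb {R : realType} (d y : R) (n : nat) : R :=
  (dfact n)%:R * ((1 + d) * y) ^+ n.

Lemma hb_ge0 (R : realType) (d y : R) n : 0 <= d -> 0 <= y -> 0 <= hb d y n.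
Proof. move=> d0 y0; rewrite /hb mulr_ge0 // exprn_ge0 // mulr_ge0 //; lra. Qed.

Lemma hb_rec (R : realType) (x y d : R) (m : nat) : 0 <= y -> 0 <= d -> x = y ^+ 2 ->
  2 * (m.+2)%:R <= y ^+ 2 * d ^+ 2 ->
  (m.+1)%:R * (hb d y m.+1 + x * hb d y m) <= hb d y m.+2.
Proof.
move=> y0 d0 -> Hyd.
have Hn := dfact_sq m.+1.
rewrite /hb dfactSS.
set D := dfact m in Hn *; set E := dfact m.+1 in Hn *.
have HnR : (E%:R : R) ^+ 2 * (m.+3)%:R <= 2 * (m.+2)%:R ^+ 2 * (D%:R) ^+2.
  have : ((E ^ 2 * m.+3)%:R : R) <= (2 * dfact m.+2 ^ 2)%:R by rewrite ler_nat.
  rewrite dfactSS -/D. lra.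
have D0 : (0 : R) <= D%:R by [].
have E0 : (0 : R) <= E%:R by [].
set M := (m%:R : R).
have e1 : (m.+1)%:R = M + 1 :> R by rewrite -natr1.
have e2 : (m.+2)%:R = M + 2 :> R by rewrite -addn2 natrD.
have e3 : (m.+3)%:R = M + 3 :> R by rewrite -addn3 natrD.
rewrite e2 e3 in HnR Hyd. rewrite natrM e1 e2.
have M0 : 0 <= M by [].
have K2 : ((M + 1) * E%:R) ^+ 2 <= ((M + 2) * D%:R * y * d) ^+ 2.
  have : ((M + 1) * E%:R) ^+ 2 * (M + 3) <= ((M + 2) * D%:R * y * d) ^+ 2 * (M + 3).
    rewrite !exprMn.
    have h1 : 2 * (M + 1) ^+ 2 <= (M+3) * (y ^+ 2 * d ^+ 2) by nra.
    have p1 := ler_wpM2l (exprn_ge0 2 (_ : 0 <= M + 1)) HnR.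
    have p2 := ler_wpM2r (exprn_ge0 2 (_ : 0 <= (M + 2) * D%:R)) h1.
    have q1 : 0 <= M + 1 by lra.
    have q2 : 0 <= (M + 2) * D%:R by rewrite mulr_ge0 //; lra.
    move: (p1 q1) (p2 q2); rewrite !exprMn => r1 r2.
    lra.
  rewrite ler_pM2r //; lra.
have K : (M + 1) * E%:R <= (M + 2) * D%:R * y * d.
  have : 0 <= (M + 2) * D%:R * y * d by rewrite !mulr_ge0 //; lra.
  have : 0 <= (M + 1) * E%:R by rewrite mulr_ge0 //; lra.
  nra.
set z := (1 + d) * y.
rewrite !exprS.
have z0 : 0 <= z ^+ m by rewrite exprn_ge0 // mulr_ge0 //; lra.
suff : (M + 1) * (E%:R * z + y ^+ 2 * D%:R) <= (M + 2) * D%:R * (z * z).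
  move=> H; have := ler_wpM2r z0 H. move=> H2. lra.
have := ler_wpM2r (_ : 0 <= z) K.
rewrite /z; move=> /(_ ltac:(rewrite mulr_ge0 //; lra)) K'.
have hD : 0 <= D%:R * y ^+ 2 by rewrite mulr_ge0 // exprn_ge0.
have := ler_wpM2r hD (_ : M + 1 <= (M + 2) * (1 + d)).
move=> /(_ ltac:(nra)) H3.
lra.
Qed.

Section Sums.
Variable R : realType.

Lemma sub_sum (I : finType) (P Q : pred I) (F : I -> R) :
  (forall i, P i -> Q i) -> (forall i, Q i -> 0 <= F i) ->
  \sum_(i | P i) F i <= \sum_(i | Q i) F i.
Proof.
move=> PQ F0; rewrite [X in _ <= X](bigID P) /=.
rewrite (eq_bigl P) => [|i]; last by case Pi: (P i); rewrite ?andbT ?andbF ?PQ.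
by rewrite lerDl sumr_ge0 // => i /andP[/F0].
Qed.

Lemma inj_sum (I J : finType) (P : pred I) (Q : pred J) (f : I -> J) (G : J -> R) :
  {in P &, injective f} -> (forall i, P i -> Q (f i)) -> (forall j, Q j -> 0 <= G j) ->
  \sum_(i | P i) G (f i) <= \sum_(j | Q j) G j.
Proof.
move=> fi PQ G0.
have -> : \sum_(i | P i) G (f i) = \sum_(i in P) G (f i) by [].
rewrite -(big_imset _ fi); apply: sub_sum => // j /imsetP[i Pi ->]; exact: PQ.
Qed.
End Sums.

Section Derange.
Variables (R : realType) (T : finType) (x : R).
Hypothesis x0 : 0 <= x.

Definition dpred (A : {set T}) (s : {perm T}) := perm_on A s && [forall i in A, s i != i].
Definition dsum A := \sum_(s | dpred A s) x ^+ #|porbits s|.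

Lemma porbits1 : #|porbits (1 : {perm T})| = #|T|.
Proof.
rewrite /porbits card_imset // => y z; move/eqP; rewrite eq_porbit_mem.
by rewrite porbit.unlock cycle1 imset_set1 /aperm perm1 inE=> /eqP.
Qed.

Lemma dsum0 : dsum finset.set0 = x ^+ #|T|.
Proof.
rewrite /dsum (big_pred1 1%g) ?porbits1 // => s; rewrite /dpred /=.
apply/andP/eqP => [[ps _]|->]; first by apply: perm_on_id ps _; rewrite cards0.
by split; [exact: perm_on1 | apply/forall_inP => i; rewrite inE].
Qed.

Lemma card_porbits_mult (s : {perm T}) a : s a != a ->
  #|porbits (s * tperm a (s a))%g| = #|porbits s|.+1.
Proof.
move=> sa.
have := porbits_mul_tperm (s^-1) a (s a).
rewrite porbitV.
have -> : a \in porbit s (s a).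
  by rewrite porbit_sym; have := mem_porbit s 1 a; rewrite expg1.
rewrite /= addn0 eq_sym sa addn1 => H.
have -> : (s * tperm a (s a) = (tperm a (s a) * s^-1)^-1)%g by rewrite invMg invgK tpermV.
by rewrite porbitsV H porbitsV.
Qed.

Definition qpred (A : {set T}) a j (u : {perm T}) :=
  perm_on (A :\ a) u && [forall i in A :\ a, (u i != i) || (i == j)].

Lemma dpred_step (A : {set T}) (a : T) (s : {perm T}) : a \in A -> dpred A s -> qpred A a (s a) (s * tperm a (s a))%g.
Proof.
move=> aA /andP[ps /forall_inP ds].
have saA : s a \in A by rewrite perm_closed.
have sa : s a != a by exact: ds.
apply/andP; split.
  rewrite /perm_on; apply/fintype.subsetP => i; rewrite inE permM => ui.
  have ia : i != a by apply: contraNneq ui => ->; rewrite tpermR.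
  rewrite !inE ia /=; apply: contraR ui => iA.
  rewrite (out_perm ps iA) tpermD // ?(eq_sym a i) //.
  by apply: contraNneq iA => <-.
apply/forall_inP => i; rewrite !inE permM => /andP[ia iA].
apply/orP; case: (tpermP a (s a) (s i)) => [sia|sisa|sia sisa].
- by apply/orP; rewrite eq_sym orNb.
- by left; rewrite eq_sym.
- by left; exact: ds.
Qed.

Lemma dsum_step (A : {set T}) (a j : T) : a \in A ->
  x * \sum_(s | dpred A s && (s a == j)) x ^+ #|porbits s| <= dsum (A :\ a) + dsum (A :\ a :\ j).
Proof.
move=> aA; rewrite mulr_sumr.
rewrite (eq_bigr (fun s => x ^+ #|porbits (s * tperm a j)%g|)); last first.
  move=> s /andP[ds /eqP <-]; rewrite card_porbits_mult ?exprS //.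
  by case/andP: ds => _ /forall_inP; apply.
apply: le_trans (@inj_sum R _ _ _ (qpred A a j) (fun s => (s * tperm a j)%g) (fun u => x ^+ #|porbits u|) _ _ _) _.
- by move=> s1 s2 _ _ /mulIg.
- by move=> s /andP[ds /eqP <-]; apply: dpred_step.
- by move=> u _; apply: exprn_ge0.
rewrite (bigID (fun u : {perm T} => u j == j)) /= addrC; apply: lerD; apply: sub_sum.
- move=> u /andP[/andP[pu /forall_inP qu] uj]; apply/andP; split => //.
  apply/forall_inP => i iA; have := qu i iA.
  by case: (eqVneq i j) => [->|ij]; rewrite ?orbF.
- by move=> u _; apply: exprn_ge0.
- move=> u /andP[/andP[pu /forall_inP qu] /eqP uj]; apply/andP; split.
    rewrite /perm_on; apply/fintype.subsetP => i; rewrite inE => ui.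
    have := (fintype.subsetP pu) i ui.
    move=> iAa; rewrite in_setD1 iAa andbT; apply: contraNneq ui => ->; exact/eqP.
  apply/forall_inP => i; rewrite in_setD1 => /andP[ij iA]; have := qu i iA.
  by rewrite (negbTE ij) orbF.
- by move=> u _; apply: exprn_ge0.
Qed.


Lemma dsum_bound (h : nat -> R) : 0 < x -> (forall n, 0 <= h n) -> h 0%N = 1 ->
  (forall n, (1 <= n <= #|T|)%N -> (n.-1)%:R * (h n.-1 + x * h n.-2) <= h n) ->
  forall A : {set T}, dsum A <= x ^+ (#|T| - #|A|) * h #|A|.
Proof.
move=> xp h0 h00 hr.
suff H : forall n (A : {set T}), (#|A| <= n)%N -> dsum A <= x ^+ (#|T| - #|A|) * h #|A|.
  by move=> A; apply: H (leqnn _).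
elim=> [|n IH] A.
  rewrite leqn0 => /eqP /cards0_eq ->; rewrite dsum0 cards0 subn0 h00 mulr1 //.
case: (posnP #|A|) => [/cards0_eq -> _|A0 An].
  by rewrite dsum0 cards0 subn0 h00 mulr1.
have [a aA] : exists a, a \in A by apply/card_gt0P.
set N := #|A|.
have NT : (N <= #|T|)%N by apply: max_card.
have cA1 : #|A :\ a| = N.-1 by move: (cardsD1 a A); rewrite aA -/N; lia.
rewrite -(ler_pM2l xp) /dsum.
rewrite (partition_big (fun s : {perm T} => s a) (fun j => j \in A :\ a)); last first.
  move=> s /andP[ps /forall_inP ds]; rewrite in_setD1 perm_closed // aA andbT.
  exact: ds.
rewrite mulr_sumr.
set c := x ^+ (#|T| - N) * (x * (h N.-1 + x * h N.-2)).
have Hs : forall j, j \in A :\ a ->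
    x * (\sum_(s | dpred A s && (s a == j)) x ^+ #|porbits s|) <= c.
  move=> j jA.
  apply: le_trans (dsum_step _ _ _ aA) _.
  have cA2 : #|A :\ a :\ j| = N.-2 by move: (cardsD1 j (A :\ a)); rewrite jA cA1; lia.
  have N2 : (2 <= N)%N by move: (cardsD1 j (A :\ a)); rewrite jA cA1; lia.
  have e1 : (#|T| - #|A :\ a| = (#|T| - N).+1)%N by rewrite cA1; lia.
  have e2 : (#|T| - #|A :\ a :\ j| = (#|T| - N).+2)%N by rewrite cA2; lia.
  apply: le_trans (lerD (IH _ _) (IH _ _)) _.
  - by rewrite cA1; lia.
  - by rewrite cA2; lia.
  rewrite e1 e2 cA1 cA2 !exprS; rewrite /c; lra.
apply: le_trans (ler_sum _ Hs) _.
rewrite /c.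
rewrite sumr_const cA1 -mulr_natr.
rewrite [x * (_ * _)]mulrCA; rewrite -mulrA ler_wpM2l ?exprn_ge0 //.
rewrite -mulrA ler_wpM2l ?(ltW xp) // mulrC.
apply: hr; rewrite NT andbT; exact: A0.
Qed.

End Derange.

Section Parts.
Variables (T : finType).

Definition ppred (A : {set T}) (P : {set {set T}}) :=
  finset.partition P A && [forall B in P, 1 < #|B|]%N.

Lemma card_ppred A Q : ppred A Q -> (#|Q| <= #|A|)%N.
Proof.
case/andP => pQ /forall_inP bQ; rewrite (card_partition pQ) -sum1_card.
by apply: leq_sum => B /bQ; lia.
Qed.

Lemma pblock_facts A P a : ppred A P -> a \in A ->
  [/\ pblock P a \in P, a \in pblock P a, pblock P a \subset A & (1 < #|pblock P a|)%N].
Proof.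
case/andP => pP /forall_inP bP aA.
have aC : a \in finset.cover P by rewrite (cover_partition pP).
have BP := pblock_mem aC.
split => //; [by rewrite mem_pblock | exact: partitionS pP BP | exact: bP].
Qed.

Definition jP (P : {set {set T}}) a := odflt a [pick j in pblock P a :\ a].

Lemma pair1 (A : {set T}) P a : ppred A P -> a \in A -> #|pblock P a| = 2%N ->
  [/\ pblock P a = [set a; jP P a], jP P a \in A :\ a,
      ppred (A :\ a :\ jP P a) (P :\ pblock P a) & #|P| = (#|P :\ pblock P a|).+1].
Proof.
move=> pp aA c2; have [BP aB BA _] := pblock_facts _ _ _ pp aA.
set B := pblock P a in BP aB BA c2 *.
have : #|B :\ a| == 1%N by move: (cardsD1 a B); rewrite aB c2; lia.
case/cards1P => j Bj.
have jE : jP P a = j.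
  rewrite /jP -/B Bj; case: pickP => [k|]; first by rewrite inE => /eqP.
  by move/(_ j); rewrite inE eqxx.
rewrite jE.
have eB : B = [set a; j] by rewrite -(setD1K aB) Bj.
have jB : j \in B by rewrite eB !inE eqxx orbT.
have jBa : j \in B :\ a by rewrite Bj set11.
have ja : j != a by move: jBa; rewrite in_setD1 => /andP[].
have jA : j \in A by apply: (fintype.subsetP BA).
split => //.
- by rewrite in_setD1 ja jA.
- case/andP: pp => pP /forall_inP bP; apply/andP; split.
    have -> : A :\ a :\ j = A :\: B.
      by rewrite eB setDDl.
    exact: partitionD1.
  by apply/forall_inP => C; rewrite in_setD1 => /andP[_ /bP].
- by rewrite (cardsD1 B P) BP.
Qed.


Lemma pair2 (A : {set T}) P a : ppred A P -> a \in A -> #|pblock P a| != 2%N ->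
  [/\ ppred (A :\ a) ((pblock P a :\ a) |: (P :\ pblock P a)),
      #|(pblock P a :\ a) |: (P :\ pblock P a)| = #|P|
    & P = (a |: (pblock P a :\ a)) |: (((pblock P a :\ a) |: (P :\ pblock P a)) :\ (pblock P a :\ a))].
Proof.
move=> pp aA c2; have [BP aB BA c1] := pblock_facts _ _ _ pp aA.
case/andP: pp => pP /forall_inP bP.
set B := pblock P a in BP aB BA c1 c2 *.
set C := B :\ a.
have cC : (1 < #|C|)%N by move: (cardsD1 a B); rewrite aB /C; lia.
have C0 : C != finset.set0 by rewrite -card_gt0; lia.
have CB : C \subset B by apply: subD1set.
have CnP : C \notin P :\ B.
  rewrite in_setD1 negb_and negbK; apply/orP; case: (boolP (C \in P)) => CP; [left|by right].
  have [z zC] : exists z, z \in C by apply/card_gt0P; lia.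
  have zB : z \in B := fintype.subsetP CB z zC.
  have tP := partition_trivIset pP.
  by rewrite -(def_pblock tP CP zC) (def_pblock tP BP zB).
split.
- apply/andP; split.
    have -> : A :\ a = C :|: (A :\: B).
      apply/setP => z; rewrite !inE; case: (boolP (z \in B)) => zB /=.
        by rewrite (fintype.subsetP BA z zB) andbT orbF.
      have za : z != a by apply: contraNneq zB => ->.
      by rewrite za.
    apply: partitionU1 => //; first exact: partitionD1.
    rewrite -setI_eq0; apply/eqP/setP => z; rewrite !inE.
    by case: (z \in B) => //; rewrite !andbF.
  apply/forall_inP => D; rewrite in_setU1 => /orP[/eqP ->//|].
  by rewrite in_setD1 => /andP[_ /bP].
- by rewrite cardsU1 CnP (cardsD1 B P) BP.
- by rewrite setU1K // setD1K // setD1K.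
Qed.


Section PSum.
Variables (R : realType) (x : R).
Hypothesis x0 : 0 <= x.

Definition psum (A : {set T}) := \sum_(P | ppred A P) x ^+ #|P|.

Lemma psum0 : psum finset.set0 = 1.
Proof.
rewrite /psum (big_pred1 finset.set0) ?cards0 ?expr0 // => P.
rewrite /ppred partition_set0; apply/andP/eqP => [[/eqP -> _]|->] //.
by split => //; apply/forall_inP => B; rewrite inE.
Qed.

Lemma part1 (A : {set T}) (a : T) : a \in A ->
  \sum_(P | ppred A P && (#|pblock P a| == 2%N)) x ^+ #|P| <=
  \sum_(j | j \in A :\ a) x * psum (A :\ a :\ j).
Proof.
move=> aA.
rewrite (eq_bigr (fun P => x * x ^+ #|P :\ pblock P a|)); last first.
  by move=> P /andP[pp /eqP c2]; have [_ _ _ ->] := pair1 _ _ _ pp aA c2; rewrite exprS.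
under [X in _ <= X]eq_bigr do rewrite /psum mulr_sumr.
rewrite pair_big_dep /=.
apply: (@inj_sum R _ _ _ (fun p => (p.1 \in A :\ a) && ppred (A :\ a :\ p.1) p.2)
   (fun P => (jP P a, P :\ pblock P a)) (fun p => x * x ^+ #|p.2|)).
- move=> P1 P2 /andP[pp1 /eqP c1] /andP[pp2 /eqP c2] [e1 e2].
  have [BP1 _ _ _] := pblock_facts _ _ _ pp1 aA.
  have [BP2 _ _ _] := pblock_facts _ _ _ pp2 aA.
  have [b1 _ _ _] := pair1 _ _ _ pp1 aA c1; have [b2 _ _ _] := pair1 _ _ _ pp2 aA c2.
  by rewrite -(setD1K BP1) -(setD1K BP2) e2 b1 b2 e1.
- by move=> P /andP[pp /eqP c2]; have [_ j1 j2 _] := pair1 _ _ _ pp aA c2; rewrite /= j1 j2.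
- by move=> p _; rewrite mulr_ge0 // exprn_ge0.
Qed.

Lemma part2 (A : {set T}) (a : T) : a \in A ->
  \sum_(P | ppred A P && ~~ (#|pblock P a| == 2%N)) x ^+ #|P| <=
  \sum_(Q | ppred (A :\ a) Q) x ^+ #|Q| *+ #|Q|.
Proof.
move=> aA.
rewrite (eq_bigr (fun P => x ^+ #|(pblock P a :\ a) |: (P :\ pblock P a)|)); last first.
  by move=> P /andP[pp c2]; have [_ -> _] := pair2 _ _ _ pp aA c2.
under [X in _ <= X]eq_bigr do rewrite -sumr_const.
rewrite pair_big_dep /=.
apply: (@inj_sum R _ _ _ (fun p => ppred (A :\ a) p.1 && (p.2 \in p.1))
   (fun P => ((pblock P a :\ a) |: (P :\ pblock P a), pblock P a :\ a))
   (fun p => x ^+ #|p.1|)).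
- move=> P1 P2 /andP[pp1 c1] /andP[pp2 c2] [e1 e2].
  have [_ _ E1] := pair2 _ _ _ pp1 aA c1; have [_ _ E2] := pair2 _ _ _ pp2 aA c2.
  by rewrite E1 E2 e1 e2.
- by move=> P /andP[pp c2]; have [p1 _ _] := pair2 _ _ _ pp aA c2; rewrite /= p1 setU11.
- by move=> p _; rewrite exprn_ge0.
Qed.


Lemma psum_bound (h : nat -> R) : (forall n, 0 <= h n) -> h 0%N = 1 ->
  (forall n, (1 <= n <= #|T|)%N -> (n.-1)%:R * (h n.-1 + x * h n.-2) <= h n) ->
  forall A : {set T}, psum A <= h #|A|.
Proof.
move=> h0 h00 hr.
suff H : forall n (A : {set T}), (#|A| <= n)%N -> psum A <= h #|A|.
  by move=> A; apply: H (leqnn _).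
elim=> [|n IH] A.
  by rewrite leqn0 => /eqP /cards0_eq ->; rewrite psum0 cards0 h00.
case: (posnP #|A|) => [/cards0_eq -> _|A0 An].
  by rewrite psum0 cards0 h00.
have [a aA] : exists a, a \in A by apply/card_gt0P.
set N := #|A|.
have NT : (N <= #|T|)%N by apply: max_card.
have cA1 : #|A :\ a| = N.-1 by move: (cardsD1 a A); rewrite aA -/N; lia.
rewrite /psum (bigID (fun P => #|pblock P a| == 2%N)) /=.
apply: le_trans (lerD (part1 _ _ aA) (part2 _ _ aA)) _.
have H1 : \sum_(j | j \in A :\ a) x * psum (A :\ a :\ j) <= (x * h N.-2) *+ N.-1.
  rewrite -cA1 -sumr_const; apply: ler_sum => j jA.
  have cA2 : #|A :\ a :\ j| = N.-2 by move: (cardsD1 j (A :\ a)); rewrite jA cA1; lia.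
  apply: ler_wpM2l => //.
  rewrite cA1 -cA2; apply: IH; rewrite cA2; lia.
have H2 : \sum_(Q | ppred (A :\ a) Q) x ^+ #|Q| *+ #|Q| <= (N.-1)%:R * psum (A :\ a).
  rewrite /psum mulr_sumr; apply: ler_sum => Q pQ.
  rewrite -mulr_natl; apply: ler_wpM2r; rewrite ?exprn_ge0 // ler_nat -cA1; exact: card_ppred pQ.
have H3 : psum (A :\ a) <= h N.-1 by rewrite -cA1; apply: IH; rewrite cA1; lia.
apply: le_trans (lerD H1 (le_trans H2 (ler_wpM2l (ler0n _ _) H3))) _.
apply: le_trans _ (hr N _); last by rewrite NT andbT.
rewrite -mulr_natl; lra.
Qed.

End PSum.
End Parts.


Lemma sums_eq_d (R : realType) (l : nat) (x : R) :
  \sum_(s : 'S_l | [forall i, s i != i]) x ^+ #|porbits s| = dsum R _ x [set: 'I_l].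
Proof.
rewrite /dsum; apply: eq_bigl => s; rewrite /dpred.
have -> : perm_on [set: 'I_l] s by apply/subsetP => i; rewrite in_setT.
by apply/forallP/forall_inP => H i; [move=> _; exact: H | exact: H i (in_setT i)].
Qed.


Theorem propositionD6 (R : realType) (l : nat) (x : R) :
  (1 <= l)%N ->
  16 * (l%:R `^ (3 / 2)) <= x ->
  (\sum_(s : 'S_l | [forall i, s i != i]) x ^+ #|porbits s|
     <= expR (l%:R `^ (3 / 4)) * (dfact l)%:R * x `^ (l%:R / 2))
  /\
  (\sum_(P : {set {set 'I_l}} | partition_ge2 P) x ^+ #|P|
     <= expR (l%:R `^ (3 / 4)) * (dfact l)%:R * x `^ (l%:R / 2)).
Proof.
move=> l1 hx.
set L : R := l%:R.
have L1 : 1 <= L by rewrite /L ler1n.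
have L0 : 0 < L by lra.
have LN0 : L != 0 by rewrite gt_eqF.
set d := L `^ (3/4) / L.
have d0 : 0 <= d by rewrite divr_ge0 ?powR_ge0 // ltW.
have P32 : L `^ (3/4) ^+ 2 = L `^ (3/2).
  rewrite -powR_mulrn ?powR_ge0 // -powRrM; congr (_ `^ _); lra.
have P3 : L `^ (3/2) * L `^ (3/2) = L ^+ 3.
  rewrite -powRD; last by apply/implyP => _.
  rewrite -powR_mulrn ?(ltW L0) //; congr (_ `^ _); lra.
have x0 : 0 < x.
  by apply: lt_le_trans hx; rewrite mulr_gt0 // powR_gt0.
set y := Num.sqrt x.
have y0 : 0 <= y by apply: sqrtr_ge0.
have xy : x = y ^+ 2 by rewrite sqr_sqrtr // ltW.
have yd : 16 * L <= y ^+ 2 * d ^+ 2.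
  rewrite -xy /d expr_div_n P32.
  have q0 : 0 <= L `^ (3 / 2) / L ^+ 2 by rewrite divr_ge0 ?powR_ge0 ?exprn_ge0 // ltW.
  have H := ler_wpM2r q0 hx.
  apply: le_trans H.
  have -> : 16 * L `^ (3 / 2) * (L `^ (3 / 2) / L ^+ 2) = 16 * (L `^ (3 / 2) * L `^ (3 / 2)) / L ^+ 2.
    by rewrite !mulrA.
  rewrite P3; have -> : 16 * L ^+ 3 / L ^+ 2 = 16 * L by field.
  exact: lexx.
have h0 : forall n, 0 <= hb d y n by move=> n; apply: hb_ge0.
have h00 : hb d y 0 = 1 by rewrite /hb expr0 mulr1.
have hr : forall n, (0 < n <= #|'I_l|)%N -> n.-1%:R * (hb d y n.-1 + x * hb d y n.-2) <= hb d y n.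
  rewrite card_ord; case=> [//|[|m]] /andP[_ nl].
    by rewrite mul0r h0.
  apply: hb_rec => //.
  have : (m.+2)%:R <= L by rewrite /L ler_nat.
  lra.
have key : hb d y l <= expR (l%:R `^ (3 / 4)) * (dfact l)%:R * x `^ (l%:R / 2).
  rewrite /hb exprMn.
  have -> : x `^ (l%:R / 2) = y ^+ l.
    rewrite /y -powR12_sqrt ?(ltW x0) // -powR_mulrn ?powR_ge0 // -powRrM.
    congr (_ `^ _); rewrite /L; lra.
  have -> : expR (l%:R `^ (3 / 4)) = expR d ^+ l.
    by rewrite -expRM_natl; congr expR; rewrite /d -/L; field.
  rewrite [expR d ^+ l * _]mulrC -!mulrA; apply: ler_wpM2l => //.
  apply: ler_wpM2r; first by rewrite exprn_ge0.
  apply: lerXn2r; rewrite ?nnegrE ?expR_ge0 //; first lra.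
  by rewrite expR_ge1Dx.
split.
- rewrite sums_eq_d; apply: le_trans (dsum_bound _ _ _ (ltW x0) _ x0 h0 h00 hr [set: 'I_l]) _.
  by rewrite cardsT card_ord subnn expr0 mul1r.
- have -> : \sum_(P : {set {set 'I_l}} | partition_ge2 P) x ^+ #|P| = psum _ _ x [set: 'I_l] by [].
  apply: le_trans (psum_bound _ _ _ (ltW x0) _ h0 h00 hr [set: 'I_l]) _.
  by rewrite cardsT card_ord.
Qed.
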